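(* Let $n\in\mathbb N$, let $A$ be a Young function satisfying (C1), (C2), (C3), and let $\varphi$ be a gauge function. Then $\psi(st)\le\varphi(t)+t^nB(s)$ for all $s,t>0$.
   Context: A gauge function is a function $\varphi\colon[0,\infty)\to[0,\infty)$ that is increasing, continuous and vanishes only at $0$, and (standing assumption) such that $r\mapsto\varphi(r)/r^n$ is non-increasing on $(0,\infty)$. A Young function is a non-trivial convex $A\colon[0,\infty)\to[0,\infty]$ with $A(0)=0$; $\widetilde A(t)=\sup_{\tau\ge0}(\tau t-A(\tau))$. Conditions: (C1) if $n=1$, $\lim_{t\to\infty}t/A(t)=0$; if $n\ge2$, $\int^\infty (t/A(t))^{1/(n-1)}dt<\infty$. (C2) $0<A(t)<\infty$ for $t>0$. (C3) if $n=1$, $\lim_{t\to0^+}t/A(t)=\infty$; if $n\ge2$, $\int_0(t/A(t))^{1/(n-1)}dt=\infty$. $B=A$ if $n=1$; for $n\ge2$, $B$ is the Young conjugate of $t\mapsto t^{n'}\int_t^\infty\widetilde A(s)s^{-1-n'}ds$, $n'=n/(n-1)$. $J(0)=0$, $J(s)=s\,B^{-1}(\varphi(s)/s^n)$ for $s>0$ (an increasing bijection of $[0,\infty)$), and $\psi(r)=\varphi(J^{-1}(r))$ for $r\ge0$. *)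

(* Defs.v *)
From HB Require Import structures.
From mathcomp Require Import all_boot all_order all_algebra.
From mathcomp Require Import all_classical all_reals all_analysis.
Set Implicit Arguments. Unset Strict Implicit. Unset Printing Implicit Defensive.
Import Order.TTheory GRing.Theory Num.Theory.
Import numFieldNormedType.Exports.
Local Open Scope classical_set_scope.
Local Open Scope ring_scope.

Section Defs.
Variable R : realType.

Definition gauge (n : nat) (phi : R -> R) : Prop :=
  [/\ (forall r, 0 <= r -> 0 <= phi r),
      (forall r1 r2, 0 <= r1 -> r1 <= r2 -> phi r1 <= phi r2),
      {within `[0, +oo[, continuous phi},
      phi 0 = 0 /\ (forall r, 0 < r -> phi r != 0)
    & (forall r1 r2, 0 < r1 -> r1 <= r2 -> phi r2 / r2 ^+ n <= phi r1 / r1 ^+ n)].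

(* Young function A : [0,oo) -> [0,oo] (values outside [0,oo) irrelevant). *)
Definition young_function (A : R -> \bar R) : Prop :=
  [/\ A 0 = 0%E,
      (forall t : R, 0 <= t -> (0 <= A t)%E),
      (forall x y l : R, 0 <= x -> 0 <= y -> (0 <= l <= 1)%R ->
         (A (l * x + (1 - l) * y)%R <= l%:E * A x + (1 - l)%:E * A y)%E)
    & (exists t : R, 0 < t /\ A t != 0%E) /\ (exists t : R, 0 < t /\ A t != +oo%E)].

Definition young_conj (A : R -> \bar R) (t : R) : \bar R :=
  ereal_sup [set x | exists2 tau : R, 0 <= tau & x = ((tau * t)%:E - A tau)%E].

Definition nprime (n : nat) : R := n%:R / (n.-1)%:R.

Definition Eaux (n : nat) (A : R -> \bar R) (t : R) : \bar R :=
  ((t `^ nprime n)%:E *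
   \int[lebesgue_measure]_(s in `[t, +oo[%classic) (young_conj A s * (s `^ (-1 - nprime n))%:E))%E.

Definition Bfun (n : nat) (A : R -> \bar R) : R -> \bar R :=
  if n == 1%N then A else young_conj (Eaux n A).

Definition Binv (B : R -> \bar R) (r : R) : \bar R :=
  ereal_sup [set x | exists2 tau : R, 0 <= tau /\ (B tau <= r%:E)%E & x = tau%:E].

Definition Jfun (n : nat) (A : R -> \bar R) (phi : R -> R) (s : R) : \bar R :=
  if s == 0 then 0%E else (s%:E * Binv (Bfun n A) (phi s / s ^+ n))%E.

(* inverse of the increasing bijection J of [0,oo) *)
Definition Jinv (n : nat) (A : R -> \bar R) (phi : R -> R) (r : R) : R :=
  fine (ereal_sup [set x | exists2 u : R, 0 <= u /\ (Jfun n A phi u <= r%:E)%E & x = u%:E]).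

Definition psi (n : nat) (A : R -> \bar R) (phi : R -> R) (r : R) : R :=
  phi (Jinv n A phi r).

Definition cond_C1 (n : nat) (A : R -> \bar R) : Prop :=
  if n == 1%N then (fun t => t / fine (A t)) @ +oo --> (0 : R)
  else exists a : R, 0 < a /\
    (\int[lebesgue_measure]_(t in `[a, +oo[%classic)
        ((t / fine (A t)) `^ ((n.-1)%:R)^-1)%:E < +oo)%E.

Definition cond_C2 (A : R -> \bar R) : Prop :=
  forall t : R, 0 < t -> (0 < A t)%E /\ (A t < +oo)%E.

Definition cond_C3 (n : nat) (A : R -> \bar R) : Prop :=
  if n == 1%N then (fun t => t / fine (A t)) @ 0^'+ --> +oo
  else forall a : R, 0 < a ->
    (\int[lebesgue_measure]_(t in `]0%R, a]%classic) ((t / fine (A t)) `^ ((n.-1)%:R)^-1)%:E = +oo)%E.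

End Defs.

(* Main.v *)
Require Import Defs.
From HB Require Import structures.
From mathcomp Require Import all_boot all_order all_algebra.
From mathcomp Require Import all_classical all_reals all_analysis.
From mathcomp Require Import ring lra.
Import Order.TTheory GRing.Theory Num.Theory.
Import numFieldNormedType.Exports.
Local Open Scope ring_scope.
Local Open Scope classical_set_scope.

Section H.
Variable R : realType.
Local Open Scope ereal_scope.

Lemma le_int_sub (D1 D2 : set R) (f : R -> \bar R) : D1 `<=` D2 ->
  (forall x, D2 x -> 0 <= f x) ->
  \int[lebesgue_measure]_(x in D1) f x <= \int[lebesgue_measure]_(x in D2) f x.
Proof.
move=> D12 f0; rewrite !ge0_integralE//; last by move=> x /D12/f0.
apply: le_ereal_sup => _ [h /= hf <-]; exists h => //= x.
apply: (le_trans (hf x)); rewrite /patch.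
case: ifPn => [/set_mem xD1|_].
  by rewrite ifT//; apply/mem_set/D12.
by case: ifPn => // /set_mem /f0.
Qed.

Lemma young_conj_ge0 (A : R -> \bar R) t : A 0%R = 0 -> 0 <= young_conj A t.
Proof.
move=> A0; apply: ereal_sup_ubound; exists 0%R => //.
by rewrite mul0r A0 sube0.
Qed.

Lemma Eaux_ge0 n (A : R -> \bar R) x : A 0%R = 0 -> (0 <= x)%R -> 0 <= Eaux n A x.
Proof.
move=> A0 x0; rewrite /Eaux mule_ge0// ?lee_fin ?powR_ge0//.
apply: integral_ge0 => s /= s0; rewrite mule_ge0// ?young_conj_ge0// lee_fin powR_ge0//.
Qed.


Lemma Eaux_scale n (A : R -> \bar R) (mu x : R) : A 0%R = 0 ->
  (0 < mu <= 1)%R -> (0 <= x)%R ->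
  (mu `^ nprime R n)%:E * Eaux n A x <= Eaux n A (mu * x).
Proof.
move=> A0 /andP[mu0 mu1] x0; rewrite /Eaux powRM ?(ltW mu0)// EFinM -muleA.
apply: lee_wpmul2l; first by rewrite lee_fin powR_ge0.
apply: lee_wpmul2l; first by rewrite lee_fin powR_ge0.
apply: le_int_sub.
  move=> y /=; rewrite !in_itv /= !andbT; apply: le_trans.
  by rewrite ler_piMl.
move=> s /=; rewrite in_itv /= andbT => hs.
by rewrite mule_ge0// ?young_conj_ge0// lee_fin powR_ge0.
Qed.

Lemma Bfun_scale n (A : R -> \bar R) (l s : R) : young_function A -> (0 < n)%N ->
  (0 <= s)%R -> (0 < l <= 1)%R -> Bfun n A (l * s) <= (l ^+ n)%:E * Bfun n A s.
Proof.
move=> [A0 _ Aconv _] n0 s0 /andP[l0 l1]; rewrite /Bfun; case: ifPn => [/eqP n1|n1].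
  have := Aconv s 0%R l s0 (lexx _); rewrite ltW ?l1 //= => /(_ isT).
  by rewrite mulr0 addr0 A0 mule0 adde0 n1 expr1.
apply: ge_ereal_sup => _ [tau tau0 ->].
set mu := (l ^+ n.-1)%R.
have mu0 : (0 < mu)%R by rewrite exprn_gt0.
have mu1 : (mu <= 1)%R by rewrite exprn_ile1// ltW.
set rho := (tau / mu)%R.
have rho0 : (0 <= rho)%R by rewrite divr_ge0// ltW.
have taue : tau = (mu * rho)%R by rewrite /rho mulrC divfK// gt_eqF.
have npos : (n.-1 != 0)%N by move: n0 n1; case: (n) => [|[|k]].
have hmu : (mu `^ nprime R n = l ^+ n)%R.
  rewrite /mu -powR_mulrn ?(ltW l0)// -powRrM /nprime mulrC divfK ?powR_mulrn ?(ltW l0)//.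
  by rewrite pnatr_eq0.
have H : ((l ^+ n)%:E * Eaux n A rho <= Eaux n A tau).
  by rewrite taue -hmu; apply: Eaux_scale; rewrite ?mu0 ?mu1.
have E0 := @Eaux_ge0 n A rho A0 rho0.
have ln0 : (0 < l ^+ n)%R by rewrite exprn_gt0.
case E: (Eaux n A rho) E0 H => [e| |] // E0 H.
- apply: le_trans (leeB (lexx _) H) _.
  rewrite -EFinM -EFinB.
  have -> : (tau * (l * s) - l ^+ n * e = l ^+ n * (rho * s - e))%R.
    rewrite taue /rho -(prednK n0) exprS -/mu; field.
    by rewrite gt_eqF.
  rewrite EFinM; apply: lee_wpmul2l; first by rewrite lee_fin ltW.
  by apply: ereal_sup_ubound; exists rho => //; rewrite E.
- have -> : Eaux n A tau = +oo.
    by apply/eqP; rewrite -leye_eq; apply: le_trans H; rewrite gt0_muley ?lte_fin.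
  by rewrite leNye.
Qed.


Lemma key n (A : R -> \bar R) (phi : R -> R) (s t b v : R) :
  young_function A -> (0 < n)%N -> gauge n phi -> (0 < s)%R -> (0 < t)%R ->
  Bfun n A s = b%:E -> (0 <= v)%R -> Jfun n A phi v <= (s * t)%:E -> (t < v)%R ->
  (phi v <= t ^+ n * b)%R.
Proof.
move=> hA n0 [phi0 phimon _ _ _] s0 t0 Bs v0 Jv tv.
have vpos : (0 < v)%R by apply: lt_trans tv.
move: Jv; rewrite /Jfun gt_eqF//.
set r := (phi v / v ^+ n)%R.
set X := Binv (Bfun n A) r => Jv.
have Xle : X <= (s * t / v)%:E.
  case: X Jv => [x| |] //=; last by rewrite leNye.
  - by rewrite -EFinM !lee_fin ler_pdivlMr// mulrC.
  - by rewrite gt0_muley ?lte_fin.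
have Hgt : forall tau, (0 <= tau)%R -> (s * t / v < tau)%R -> r%:E < Bfun n A tau.
  move=> tau tau0 htau; rewrite ltNge; apply/negP => Btau.
  have : tau%:E <= X by apply: ereal_sup_ubound; exists tau.
  by move=> /le_trans /(_ Xle); rewrite lee_fin leNgt htau.
have Hw : forall w, (t < w)%R -> (w <= v)%R -> (phi v < w ^+ n * b)%R.
  move=> w tw wv.
  have w0 : (0 < w)%R by apply: lt_trans tw.
  set l := (w / v)%R.
  have l0 : (0 < l)%R by rewrite divr_gt0.
  have l1 : (l <= 1)%R by rewrite ler_pdivrMr// mul1r.
  have := Hgt (l * s)%R (mulr_ge0 (ltW l0) (ltW s0)).
  have -> : (s * t / v < l * s)%R.
    have -> : (l * s = s * w / v)%R by rewrite /l mulrC mulrA.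
    by rewrite ltr_pM2r ?invr_gt0// ltr_pM2l.
  move=> /(_ isT) /lt_le_trans /(_ (@Bfun_scale n A l s hA n0 (ltW s0) (andb_true_intro (conj l0 l1)))).
  rewrite Bs -EFinM lte_fin /r /l expr_div_n mulrAC.
  by rewrite ltr_pM2r// invr_gt0 exprn_gt0.
have phiv0 := phi0 v v0.
have b0 : (0 < b)%R.
  rewrite ltNge; apply/negP => b0.
  have := Hw v tv (lexx _); rewrite ltNge => /negP; apply.
  by apply: le_trans phiv0; rewrite mulr_ge0_le0// exprn_ge0// ltW.
set c := ((phi v / b) `^ (n%:R^-1))%R.
have c0 : (0 <= c)%R by rewrite powR_ge0.
have cn : (c ^+ n = phi v / b)%R.
  rewrite -powR_mulrn// -powRrM mulVf ?pnatr_eq0 -?lt0n// powRr1//.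
  by rewrite divr_ge0// ltW.
have phic : phi v = (c ^+ n * b)%R by rewrite cn divfK// gt_eqF.
have ct : (c <= t)%R.
  rewrite leNgt; apply/negP => tc.
  have tw : (t < Order.min c v)%R by rewrite lt_min tc tv.
  have minv : (Order.min c v <= v)%R by rewrite ge_min lexx orbT.
  have minc : (Order.min c v <= c)%R by rewrite ge_min lexx.
  have := Hw _ tw minv; rewrite phic ltr_pM2r//.
  rewrite ltr_pXn2r// ?nnegrE ?(le_trans (ltW t0) (ltW tw))//.
  by rewrite ltNge minc.
by rewrite phic ler_pM2r// lerXn2r// nnegrE ltW.
Qed.


Lemma Bfun_ge0 n (A : R -> \bar R) s : young_function A -> (0 < n)%N -> (0 <= s)%R -> 0 <= Bfun n A s.
Proof.
move=> [A0 Age0 _ _] n0 s0; rewrite /Bfun; case: ifPn => [_|n1]; first exact: Age0.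
have n2 : (n.-1 != 0)%N by move: n0 n1; case: (n) => [|[|]].
have n3 : (n != 0)%N by rewrite -lt0n.
apply: young_conj_ge0; rewrite /Eaux powR0 ?mul0e//.
by rewrite /nprime mulf_neq0 ?invr_eq0 ?pnatr_eq0.
Qed.

End H.

Theorem lemma4p4 (R : realType) (n : nat) (A : R -> \bar R) (phi : R -> R) :
  (0 < n)%N ->
  young_function A -> cond_C1 n A -> cond_C2 A -> cond_C3 n A ->
  gauge n phi ->
  forall s t : R, 0 < s -> 0 < t ->
    ((psi n A phi (s * t))%:E <= (phi t)%:E + (t ^+ n)%:E * Bfun n A s)%E.
Proof.
move=> n0 hA _ _ _ hphi s t s0 t0.
have [phi0 phimon phic [phi00 _] _] := hphi.
have Bs0 := @Bfun_ge0 R n A s hA n0 (ltW s0).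
case Bs: (Bfun n A s) Bs0 => [b| |] // Bs0; last first.
  by rewrite gt0_muley ?lte_fin ?exprn_gt0// addey// leey.
have b0 : (0 <= b)%R by rewrite -lee_fin.
have Cge0 : (0 <= phi t + t ^+ n * b)%R.
  apply: addr_ge0; first by apply: phi0; apply: ltW.
  by apply: mulr_ge0 => //; apply: exprn_ge0; apply: ltW.
rewrite -EFinM -EFinD lee_fin /psi /Jinv.
set U := ereal_sup _.
have U0 : (0 <= U)%E.
  apply: ereal_sup_ubound; exists 0%R => //; split => //.
  by rewrite /Jfun eqxx lee_fin; apply: mulr_ge0; apply: ltW.
case HU: U U0 => [u| |] // u0 /=; last by rewrite phi00.
rewrite lee_fin in u0.
case: (leP u t) => ut.
  apply: le_trans (phimon _ _ u0 ut) _.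
  by rewrite lerDl; apply: mulr_ge0 => //; apply: exprn_ge0; apply: ltW.
apply: (@le_trans _ _ (t ^+ n * b)%R); last by rewrite lerDr; apply: phi0; apply: ltW.
rewrite leNgt; apply/negP => hlt.
have ucont : {for u, continuous phi}.
  move/continuous_within_itvcyP : phic => [cin _]; apply: cin.
  by rewrite in_itv /= andbT (lt_trans t0 ut).
have hnear := cvgr_gt _ ucont _ hlt.
have [d /= d0 hd] := iffLR (nbhs_ballP _ _) (hnear _).
have : ((Order.max t (u - d))%:E < U)%E.
  by rewrite HU lte_fin gt_max ut ltrBlDr ltrDl d0.
move=> /ereal_sup_gt [_ [v [v0 Jv] ->]] hv.
have vu : (v%:E <= U)%E by apply: ereal_sup_ubound; exists v.
rewrite HU lee_fin in vu.
rewrite lte_fin gt_max in hv; case/andP: hv => tv dv.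
have := @key R n A phi s t b v hA n0 hphi s0 t0 Bs v0 Jv tv.
apply/negP; rewrite -ltNge; apply: hd.
rewrite /ball /= ger0_norm ?subr_ge0//.
by rewrite ltrBlDr addrC -ltrBlDr.
Qed.
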